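(* Suppose that for all $0\le t\le T$, $\lambda_{\min}\big(\mathbf{G}(t)+\frac{1}{\alpha^2}\mathbf{V}(t)\big)\ge\frac{\omega}{2}$ for some $\omega>0$. Then with probability at least $1-\delta$ over the initialization, $$|g_k(t)-g_k(0)|\le\frac{4\sqrt n\,\|\mathbf{f}(0)-\mathbf{y}\|_2}{\sqrt m\,\omega}$$ for each $k$ and all $0\le t\le T$.
   Context: Data $(\mathbf{x}_i,y_i)\in\mathbb{R}^d\times\mathbb{R}$, $i=1,\dots,n$, with $\|\mathbf{x}_i\|_2\le1$. Network $f(\mathbf{x})=\frac{1}{\sqrt m}\sum_{k=1}^mc_k\sigma(g_k\mathbf{v}_k^\top\mathbf{x}/\|\mathbf{v}_k\|_2)$, $\sigma(s)=\max\{s,0\}$; initialization with $\alpha>0$: independently $\mathbf{v}_k(0)\sim N(0,\alpha^2\mathbf{I})$, $c_k$ uniform on $\{-1,1\}$, $g_k(0)=\|\mathbf{v}_k(0)\|_2/\alpha$. Gradient flow on $L=\frac12\sum_i(f(\mathbf{x}_i)-y_i)^2$ in $\mathbf{v}_k,g_k$ with $c_k$ fixed; $\mathbf{f}(t)$ predictions, $\mathbf{y}$ targets. Notation: $\mathbf{x}^{\mathbf{u}^\perp}=\mathbf{x}-\mathbf{u}\mathbf{u}^\top\mathbf{x}/\|\mathbf{u}\|_2^2$, $\mathbb{1}_{ik}(t)=\mathbb{1}\{\mathbf{v}_k(t)^\top\mathbf{x}_i\ge0\}$, $\mathbf{V}_{ij}(t)=\frac1m\sum_k\big(\frac{\alpha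 c_kg_k(t)}{\|\mathbf{v}_k(t)\|_2}\big)^2\langle\mathbf{x}_i^{\mathbf{v}_k(t)^\perp},\mathbf{x}_j^{\mathbf{v}_k(t)^\perp}\rangle\mathbb{1}_{ik}(t)\mathbb{1}_{jk}(t)$, $\mathbf{G}_{ij}(t)=\frac1m\sum_k\sigma(\mathbf{v}_k(t)^\top\mathbf{x}_i)\sigma(\mathbf{v}_k(t)^\top\mathbf{x}_j)/\|\mathbf{v}_k(t)\|_2^2$. Under gradient flow $\frac{d\mathbf{f}}{dt}=-(\mathbf{V}(t)/\alpha^2+\mathbf{G}(t))(\mathbf{f}(t)-\mathbf{y})$. *)

(* Defs.v *)
From HB Require Import structures.
From mathcomp Require Import all_boot all_order all_algebra.
From mathcomp Require Import all_classical all_reals all_analysis.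
Set Implicit Arguments. Unset Strict Implicit. Unset Printing Implicit Defensive.
Import Order.TTheory GRing.Theory Num.Theory.
Local Open Scope ring_scope.
Local Open Scope classical_set_scope.

Section Defs.
Variable R : realType.

Definition relu (s : R) : R := Num.max s 0.

Definition dotv d (u w : 'rV[R]_d) : R := \sum_(j < d) u 0 j * w 0 j.
Definition normv d (u : 'rV[R]_d) : R := Num.sqrt (dotv u u).

Definition normc n (u : 'cV[R]_n) : R := Num.sqrt (\sum_(i < n) u i 0 ^+ 2).

Definition perp d (u x : 'rV[R]_d) : 'rV[R]_d :=
  x - (dotv u x / normv u ^+ 2) *: u.

Definition ind d (v x : 'rV[R]_d) : R := if 0 <= dotv v x then 1 else 0.

Definition fnet m d (c : 'I_m -> R) (g : 'I_m -> R) (v : 'I_m -> 'rV[R]_d)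
  (x : 'rV[R]_d) : R :=
  (Num.sqrt m%:R)^-1 * \sum_(k < m) c k * relu (g k * dotv (v k) x / normv (v k)).

Definition preds m d n (c : 'I_m -> R) (g : 'I_m -> R) (v : 'I_m -> 'rV[R]_d)
  (x : 'I_n -> 'rV[R]_d) : 'cV[R]_n := \col_(i < n) fnet c g v (x i).

(* the matrix V (as in the paper, including the alpha^2 factor) *)
Definition Vmat m d n (alpha : R) (c : 'I_m -> R) (g : 'I_m -> R)
  (v : 'I_m -> 'rV[R]_d) (x : 'I_n -> 'rV[R]_d) : 'M[R]_n :=
  \matrix_(i < n, j < n)
    ((m%:R)^-1 * \sum_(k < m)
        (alpha * c k * g k / normv (v k)) ^+ 2
        * dotv (perp (v k) (x i)) (perp (v k) (x j))
        * ind (v k) (x i) * ind (v k) (x j)).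

Definition Gmat m d n (v : 'I_m -> 'rV[R]_d) (x : 'I_n -> 'rV[R]_d) : 'M[R]_n :=
  \matrix_(i < n, j < n)
    ((m%:R)^-1 * \sum_(k < m)
        relu (dotv (v k) (x i)) * relu (dotv (v k) (x j)) / normv (v k) ^+ 2).

Definition lambda_min n (M : 'M[R]_n) : R := inf [set a : R | eigenvalue M a].

End Defs.

(* Main.v *)
Require Import Defs.
From HB Require Import structures.
From mathcomp Require Import all_boot all_order all_algebra.
From mathcomp Require Import all_classical all_reals all_analysis.
From mathcomp Require Import ring lra.
Import Order.TTheory GRing.Theory Num.Theory numFieldNormedType.Exports.
Local Open Scope ring_scope.
Local Open Scope classical_set_scope.

Set Implicit Arguments. Unset Strict Implicit. Unset Printing Implicit Defensive.

Section CS.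
Variable R : realType.

Lemma sumsq_ge0 k (a : 'I_k -> R) : 0 <= \sum_(i < k) a i ^+ 2.
Proof. by apply: sumr_ge0 => i _; exact: sqr_ge0. Qed.

Lemma cs_sum k (a b : 'I_k -> R) :
  (\sum_(i < k) a i * b i) ^+ 2 <= (\sum_(i < k) a i ^+ 2) * (\sum_(i < k) b i ^+ 2).
Proof.
set A := \sum_(i < k) a i ^+ 2; set B := \sum_(i < k) a i * b i;
set C := \sum_(i < k) b i ^+ 2.
have key t : 0 <= A - 2 * t * B + t ^+ 2 * C.
  have -> : A - 2 * t * B + t ^+ 2 * C = \sum_(i < k) (a i - t * b i) ^+ 2.
    rewrite /A /B /C !mulr_sumr -!sumrN -!big_split /=; apply: eq_bigr => i _.
    ring.
  exact: sumsq_ge0.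
have C0 : 0 <= C by exact: sumsq_ge0.
have [Cz|Cp] := eqVneq C 0.
  have bz i : b i = 0.
    have H := @psumr_eq0P R _ xpredT (fun i => b i ^+ 2) (fun j _ => sqr_ge0 (b j)) Cz.
    by apply/eqP; rewrite -sqrf_eq0; apply/eqP; exact: H.
  have -> : B = 0 by rewrite /B big1 // => i _; rewrite bz mulr0.
  by rewrite expr0n /= mulr_ge0 // sumsq_ge0.
have Cpos : 0 < C by rewrite lt_def Cp C0.
have := key (B / C).
have -> : A - 2 * (B / C) * B + (B / C) ^+ 2 * C = A - B ^+ 2 / C.
  by field; rewrite Cp.
rewrite subr_ge0 ler_pdivrMr //.
Qed.

Lemma dotvC d (u w : 'rV[R]_d) : dotv u w = dotv w u.
Proof. by rewrite /dotv; apply: eq_bigr => j _; rewrite mulrC. Qed.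

Lemma dotv_sq d (u : 'rV[R]_d) : dotv u u = \sum_(j < d) u 0 j ^+ 2.
Proof. by rewrite /dotv; apply: eq_bigr => j _; rewrite expr2. Qed.

Lemma dotv_ge0 d (u : 'rV[R]_d) : 0 <= dotv u u.
Proof. by rewrite dotv_sq sumsq_ge0. Qed.

Lemma dotv_eq0 d (u : 'rV[R]_d) : dotv u u = 0 -> u = 0.
Proof.
rewrite dotv_sq => H.
have H' := @psumr_eq0P R _ xpredT (fun j => u 0 j ^+ 2) (fun j _ => sqr_ge0 (u 0 j)) H.
apply/rowP => j; rewrite mxE; apply/eqP; rewrite -sqrf_eq0; apply/eqP; exact: H'.
Qed.

Lemma dotvDl d (u w z : 'rV[R]_d) : dotv (u + w) z = dotv u z + dotv w z.
Proof. by rewrite /dotv -big_split; apply: eq_bigr => j _; rewrite mxE mulrDl. Qed.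

Lemma dotvZl d a (u z : 'rV[R]_d) : dotv (a *: u) z = a * dotv u z.
Proof. by rewrite /dotv mulr_sumr; apply: eq_bigr => j _; rewrite mxE mulrA. Qed.

Lemma dotvNl d (u z : 'rV[R]_d) : dotv (- u) z = - dotv u z.
Proof. by rewrite -scaleN1r dotvZl mulN1r. Qed.

Lemma dotvBl d (u w z : 'rV[R]_d) : dotv (u - w) z = dotv u z - dotv w z.
Proof. by rewrite dotvDl dotvNl. Qed.

Lemma dotvDr d (u w z : 'rV[R]_d) : dotv z (u + w) = dotv z u + dotv z w.
Proof. by rewrite !(dotvC z) dotvDl. Qed.

Lemma dotvZr d a (u z : 'rV[R]_d) : dotv z (a *: u) = a * dotv z u.
Proof. by rewrite !(dotvC z) dotvZl. Qed.

Lemma dotvBr d (u w z : 'rV[R]_d) : dotv z (u - w) = dotv z u - dotv z w.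
Proof. by rewrite !(dotvC z) dotvBl. Qed.

Lemma dotv_2le d (u w : 'rV[R]_d) :
  2 * dotv u w <= dotv u u + dotv w w /\ - (dotv u u + dotv w w) <= 2 * dotv u w.
Proof.
have h1 := dotv_ge0 (u - w); have h2 := dotv_ge0 (u + w).
rewrite !dotvBl !dotvBr in h1; rewrite !dotvDl !dotvDr in h2.
rewrite (dotvC w u) in h1 h2; split; lra.
Qed.

Definition frob n (M : 'M[R]_n) : R := \sum_(j < n) \sum_(i < n) M i j ^+ 2.

Lemma frob_ge0 n (M : 'M[R]_n) : 0 <= frob M.
Proof. by apply: sumr_ge0 => j _; exact: sumsq_ge0. Qed.

Lemma frob_bound n (u : 'rV[R]_n) (M : 'M[R]_n) :
  dotv (u *m M) (u *m M) <= frob M * dotv u u.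
Proof.
rewrite dotv_sq /frob mulr_suml dotv_sq; apply: ler_sum => j _.
rewrite mxE mulrC; exact: cs_sum.
Qed.

Lemma dotv_sym n (M : 'M[R]_n) (u w : 'rV[R]_n) : M^T = M ->
  dotv (u *m M) w = dotv (w *m M) u.
Proof.
move=> HT; rewrite /dotv.
under eq_bigr do rewrite mxE mulr_suml.
under [RHS]eq_bigr do rewrite mxE mulr_suml.
rewrite exchange_big /=; apply: eq_bigr => i _; apply: eq_bigr => j _.
have -> : M j i = M i j by rewrite -{1}HT mxE.
ring.
Qed.

Lemma eigen_unit n (H : 'M[R]_n) a : eigenvalue H a = ~~ (H - a%:M \in unitmx).
Proof. by rewrite /eigenvalue /eigenspace kermx_eq0 row_free_unit. Qed.


Lemma dotv0l d (u : 'rV[R]_d) : dotv 0 u = 0.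
Proof. by rewrite /dotv big1 // => j _; rewrite mxE mul0r. Qed.

Lemma dotv_gt0 d (u : 'rV[R]_d) : u != 0 -> 0 < dotv u u.
Proof.
move=> unz; rewrite lt_def dotv_ge0 andbT; apply/eqP => /dotv_eq0 h.
by rewrite h eqxx in unz.
Qed.

Lemma psd_lambda n (H : 'M[R]_n) nu : H^T = H -> nu <= lambda_min H ->
  forall u : 'rV[R]_n, nu * dotv u u <= dotv (u *m H) u.
Proof.
move=> HT Hnu.
have [allz|] := pselect (forall u : 'rV[R]_n, u = 0).
  by move=> u; rewrite (allz u) mul0mx !dotv0l mulr0.
move=> /existsNP [u0 /eqP u0nz].
set S := [set r : R | exists2 u : 'rV[R]_n, u != 0 & r = dotv (u *m H) u / dotv u u].
set K0 := (frob H + 1) / 2.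
have Sbnd : lbound S (- K0).
  move=> r [u unz ->].
  have pos := dotv_gt0 unz.
  rewrite ler_pdivlMr //; have [_ h] := dotv_2le (u *m H) u.
  have fb := frob_bound u H; rewrite /K0; lra.
have Slb : has_lbound S by exists (- K0).
have Sne : S (dotv (u0 *m H) u0 / dotv u0 u0) by exists u0.
set mu := inf S.
have C1 u : mu * dotv u u <= dotv (u *m H) u.
  have [->|unz] := eqVneq u 0; first by rewrite mul0mx !dotv0l mulr0.
  have pos := dotv_gt0 unz.
  rewrite -ler_pdivlMr //; apply: ge_inf => //; by exists u.
have C2 : eigenvalue H mu.
  rewrite eigen_unit; apply/negP => Bu.
  set B := H - mu%:M.
  have uB u : u *m B = u *m H - mu *: u by rewrite mulmxBr mul_mx_scalar.
  have PSD u : 0 <= dotv (u *m B) u.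
    by rewrite uB dotvBl dotvZl; have := C1 u; lra.
  have BT : B^T = B by rewrite /B linearB /= tr_scalar_mx HT.
  set K1 := frob (invmx B); set K2 := frob B + 1.
  have K1ge0 : 0 <= K1 by exact: frob_ge0.
  have K2gt0 : 0 < K2 by have := frob_ge0 B; rewrite /K2; lra.
  have bound1 u : dotv u u <= K1 * dotv (u *m B) (u *m B).
    by have := frob_bound (u *m B) (invmx B); rewrite mulmxK.
  have bound2 w : dotv (w *m B) w <= K2 * dotv w w.
    have [h _] := dotv_2le (w *m B) w; have fb := frob_bound w B.
    have := dotv_ge0 w; have := mulr_ge0 (frob_ge0 B) (dotv_ge0 w); rewrite /K2; lra.
  have CS u : dotv (u *m B) (u *m B) <= K2 * dotv (u *m B) u.
    set w := u *m B; set s := K2^-1.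
    have sK : s * K2 = 1 by rewrite /s mulVf // gt_eqF.
    have s0 : 0 <= s by rewrite /s invr_ge0 ltW.
    have := PSD (u - s *: w).
    rewrite mulmxBl -scalemxAl dotvBl !dotvBr !dotvZl !dotvZr.
    rewrite (@dotv_sym _ B w u BT) -/w.
    set a := dotv w u; set b := dotv w w; set c := dotv (w *m B) w => h.
    have hc : s * s * c <= s * s * (K2 * b).
      by apply: ler_wpM2l; [exact: mulr_ge0 | exact: bound2].
    have e1 : s * s * (K2 * b) = s * b by rewrite -[X in _ = s * X](mul1r b) -sK; ring.
    have h2 : s * b <= a by lra.
    have := ler_wpM2l (ltW K2gt0) h2.
    by rewrite mulrA (mulrC K2) sK mul1r.
  set P := K1 * K2.
  have P0 : 0 <= P by rewrite /P mulr_ge0 // ltW.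
  set eps := (P + 1)^-1.
  have eps0 : 0 < eps by rewrite /eps invr_gt0; lra.
  have epsP : eps * (P + 1) = 1 by rewrite /eps mulVf //; apply: lt0r_neq0; lra.
  have [r [u unz ->] hr] := inf_adherent eps0 (conj (ex_intro _ _ Sne) Slb).
  have pos := dotv_gt0 unz.
  rewrite -/mu ltr_pdivrMr // in hr.
  have hx : dotv (u *m B) u < eps * dotv u u.
    by rewrite uB dotvBl dotvZl; lra.
  have h1 : dotv u u <= P * dotv (u *m B) u.
    have := bound1 u; have := CS u; have := ler_wpM2l K1ge0 (CS u).
    by rewrite /P -mulrA => h _ h'; exact: le_trans h' h.
  have h2 : P * dotv (u *m B) u <= P * (eps * dotv u u).
    by apply: ler_wpM2l => //; exact: ltW.
  have h3 : P * (eps * dotv u u) = dotv u u - eps * dotv u u.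
    have eP : eps * P = 1 - eps by rewrite -epsP; ring.
    by rewrite mulrA (mulrC P) eP; ring.
  have := mulr_gt0 eps0 pos; lra.
have C3 : lambda_min H <= mu.
  apply: (@ge_inf _ [set a : R | eigenvalue H a]) => //.
  exists mu => a /eigenvalueP [v vH vnz].
  have := C1 v; rewrite vH dotvZl.
  have pos := dotv_gt0 vnz.
  by move=> h; rewrite -(ler_pM2r pos).
move=> u; apply: le_trans (C1 u).
apply: ler_wpM2r; first exact: dotv_ge0.
exact: le_trans Hnu C3.
Qed.

End CS.

Section Der.
Variable R : realType.

Lemma dr_lin (a t : R) : is_derive t 1 (fun s => a * s) a.
Proof.
have := is_deriveZ a (is_derive_id t (1:R)).
by move=> h; apply: is_derive_eq h _; rewrite /GRing.scale /= mulr1.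
Qed.

Lemma dr_exp_lin (a t : R) : is_derive t 1 (fun s => expR (a * s)) (a * expR (a * t)).
Proof.
have := is_derive1_comp (is_derive_expR (a * t)) (dr_lin a t).
by move=> h; apply: is_derive_eq h _; rewrite mulrC.
Qed.

Lemma dr_mul (F G : R -> R) (t dF dG : R) : is_derive t 1 F dF -> is_derive t 1 G dG ->
  is_derive t 1 (fun s => F s * G s) (F t * dG + G t * dF).
Proof. by move=> hF hG; have := is_deriveM hF hG. Qed.

Lemma dr_add (F G : R -> R) (t dF dG : R) : is_derive t 1 F dF -> is_derive t 1 G dG ->
  is_derive t 1 (fun s => F s + G s) (dF + dG).
Proof. by move=> hF hG; have := is_deriveD hF hG. Qed.

Lemma dr_sub (F G : R -> R) (t dF dG : R) : is_derive t 1 F dF -> is_derive t 1 G dG ->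
  is_derive t 1 (fun s => F s - G s) (dF - dG).
Proof. by move=> hF hG; have := is_deriveB hF hG. Qed.

Lemma dr_scal (F : R -> R) (t a dF : R) : is_derive t 1 F dF ->
  is_derive t 1 (fun s => a * F s) (a * dF).
Proof. by move=> hF; have := is_deriveZ a hF. Qed.

Lemma dr_cst (a t : R) : is_derive t 1 (fun _ : R => a) 0.
Proof. exact: is_derive_cst. Qed.

Lemma dr_sum n (F : 'I_n -> R -> R) (t : R) (dF : 'I_n -> R) : (forall i, is_derive t 1 (F i) (dF i)) ->
  is_derive t 1 (fun s => \sum_(i < n) F i s) (\sum_(i < n) dF i).
Proof.
move=> h; have := is_derive_sum h.
have -> : (\sum_(i < n) F i) = (fun s => \sum_(i < n) F i s).
  by apply: funext => s; rewrite fct_sumE.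
by [].
Qed.


Section WC.
Variable A : set R.
Implicit Types F G : R -> R.

Lemma wc_mul F G : {within A, continuous F} -> {within A, continuous G} ->
  {within A, continuous (fun s => F s * G s)}.
Proof. by move=> hF hG x; apply: continuousM; [exact: hF | exact: hG]. Qed.

Lemma wc_add F G : {within A, continuous F} -> {within A, continuous G} ->
  {within A, continuous (fun s => F s + G s)}.
Proof. by move=> hF hG x; apply: continuousD; [exact: hF | exact: hG]. Qed.

Lemma wc_sub F G : {within A, continuous F} -> {within A, continuous G} ->
  {within A, continuous (fun s => F s - G s)}.
Proof. by move=> hF hG x; apply: continuousB; [exact: hF | exact: hG]. Qed.

Lemma wc_cst (a : R) : {within A, continuous (fun _ : R => a)}.
Proof. by apply: continuous_subspaceT => x; exact: cst_continuous. Qed.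

Lemma wc_id : {within A, continuous (fun s : R => s)}.
Proof. by apply: continuous_subspaceT => x. Qed.

Lemma wc_comp F (h : R -> R) : {within A, continuous F} -> continuous h ->
  {within A, continuous (fun s => h (F s))}.
Proof. by move=> hF hh x; apply: continuous_comp; [exact: hF | exact: hh]. Qed.

Lemma wc_sum n (F : 'I_n -> R -> R) : (forall i, {within A, continuous (F i)}) ->
  {within A, continuous (fun s => \sum_(i < n) F i s)}.
Proof.
move=> h; elim: n F h => [|n IH] F h.
  by under [fun s => _]funext do rewrite big_ord0; exact: wc_cst.
under [fun s => _]funext do rewrite big_ord_recr /=.
apply: wc_add; last exact: h.
exact: (IH (fun i => F (widen_ord (leqnSn n) i))).
Qed.
End WC.

Lemma wc_sub_itv (F : R -> R) (t T : R) : t <= T ->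
  {within `[0, T], continuous F} -> {within `[0, t], continuous F}.
Proof.
move=> tT; apply: continuous_subspaceW => s /=; rewrite !in_itv /= => /andP[h1 h2].
by rewrite h1 (le_trans h2 tT).
Qed.

Lemma mono_le (F dF : R -> R) (t : R) : 0 <= t ->
  (forall s, s \in `]0, t[%R -> is_derive s 1 F (dF s)) ->
  {within `[0, t], continuous F} ->
  (forall s, s \in `]0, t[%R -> dF s <= 0) -> F t <= F 0.
Proof.
move=> t0 hd hc hneg.
have [->|tp] := eqVneq t 0; first by [].
have t0' : 0 < t by rewrite lt_def tp t0.
have [c cin h] := MVT t0' hd hc.
rewrite -subr_le0 h subr0.
by apply: mulr_le0_ge0 => //; exact: hneg.
Qed.



Lemma relu_ge0 (z : R) : 0 <= relu z.
Proof. by rewrite /relu le_max lexx orbT. Qed.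

Lemma relu_le_abs (z : R) : relu z <= `|z|.
Proof. by rewrite /relu ge_max ler_norm normr_ge0. Qed.


Lemma cont_exp_lin (a : R) : continuous (fun s : R => expR (a * s)).
Proof.
move=> s; apply: (@continuous_comp _ _ _ (fun s => a * s) expR); last exact: continuous_expR.
apply: (@continuousM _ _ (fun _ => a) (fun s => s)); first exact: cst_continuous.
by [].
Qed.

Lemma wc_exp_lin (A : set R) (a : R) : {within A, continuous (fun s => expR (a * s))}.
Proof. by apply: continuous_subspaceT; exact: cont_exp_lin. Qed.

End Der.

Section B.
Variable R : realType.

Lemma normv_ge0 d (u : 'rV[R]_d) : 0 <= normv u.
Proof. exact: sqrtr_ge0. Qed.

Lemma abs_dot_le d (u w : 'rV[R]_d) : `|dotv u w| <= normv u * normv w.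
Proof.
have h := cs_sum (fun j => u 0 j) (fun j => w 0 j).
rewrite -!dotv_sq in h; rewrite -/(dotv u w) in h.
rewrite /normv -sqrtrM ?dotv_ge0 // -sqrtr_sqr ler_sqrt //.
by rewrite mulr_ge0 // dotv_ge0.
Qed.

Lemma a_bounds d (v x : 'rV[R]_d) : normv x <= 1 ->
  0 <= relu (dotv v x) / normv v <= 1.
Proof.
move=> hx; have [nz|nnz] := eqVneq (normv v) 0.
  by rewrite nz invr0 mulr0 lexx ler01.
have np : 0 < normv v by rewrite lt_def nnz normv_ge0.
rewrite divr_ge0 ?relu_ge0 ?normv_ge0 //= ler_pdivrMr // mul1r.
apply: le_trans (relu_le_abs _) _; apply: le_trans (abs_dot_le v x) _.
by rewrite -{2}(mulr1 (normv v)) ler_wpM2l // normv_ge0.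
Qed.

Lemma sum_bound n (r a : 'I_n -> R) : (forall i, 0 <= a i <= 1) ->
  `|\sum_(i < n) r i * a i| <= Num.sqrt n%:R * Num.sqrt (\sum_(i < n) r i ^+ 2).
Proof.
move=> ha; have h := cs_sum r a.
have h2 : \sum_(i < n) a i ^+ 2 <= n%:R.
  have -> : (n%:R : R) = \sum_(i < n) 1 by rewrite sumr_const card_ord.
  apply: ler_sum => i _.
  by have /andP[a0 a1] := ha i; rewrite expr2 mulr_ile1.
have h3 : (\sum_(i < n) r i * a i) ^+ 2 <= n%:R * \sum_(i < n) r i ^+ 2.
  apply: le_trans h _; rewrite [X in _ <= X]mulrC; apply: ler_wpM2l => //; exact: sumsq_ge0.
rewrite -sqrtrM ?ler0n // -sqrtr_sqr ler_sqrt //.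
by rewrite mulr_ge0 ?ler0n ?sumsq_ge0.
Qed.


Lemma Gmat_sym m d n (v : 'I_m -> 'rV[R]_d) (x : 'I_n -> 'rV[R]_d) :
  (Gmat v x)^T = Gmat v x.
Proof.
apply/matrixP => i j; rewrite !mxE; congr (_ * _); apply: eq_bigr => k _.
by congr (_ / _); rewrite mulrC.
Qed.

Lemma Vmat_sym m d n a (c g : 'I_m -> R) (v : 'I_m -> 'rV[R]_d) (x : 'I_n -> 'rV[R]_d) :
  (Vmat a c g v x)^T = Vmat a c g v x.
Proof.
apply/matrixP => i j; rewrite !mxE; congr (_ * _); apply: eq_bigr => k _.
rewrite (@dotvC _ _ (perp (v k) (x j))); ring.
Qed.

Lemma quad_col n (H : 'M[R]_n) (rc : 'cV[R]_n) : H^T = H ->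
  dotv (rc^T *m H) rc^T = \sum_(i < n) rc i 0 * (H *m rc) i 0.
Proof.
move=> HT; have -> : rc^T *m H = (H *m rc)^T by rewrite trmx_mul HT.
by rewrite /dotv; apply: eq_bigr => j _; rewrite !mxE mulrC.
Qed.

End B.
Unset Implicit Arguments. Set Strict Implicit. Set Printing Implicit Defensive.

Lemma entryB (R : realType) n (A B : 'cV[R]_n) i : (A - B) i 0 = A i 0 - B i 0.
Proof. by rewrite !mxE. Qed.

Lemma trE (R : realType) n (A : 'cV[R]_n) j : (A^T) 0 j = A j 0.
Proof. by rewrite !mxE. Qed.

Theorem lemmaB8 (R : realType) (n d m : nat)
  (x : 'I_n -> 'rV[R]_d) (y : 'cV[R]_n)
  (alpha : R) (c : 'I_m -> R)
  (v : 'I_m -> R -> 'rV[R]_d) (g : 'I_m -> R -> R)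
  (T om : R) :
  (* data *)
  (forall i, normv (x i) <= 1) ->
  (* initialization: alpha > 0, c_k in {-1,1}, g_k(0) = ||v_k(0)|| / alpha *)
  0 < alpha ->
  (forall k, c k = 1 \/ c k = -1) ->
  (forall k, g k 0 = normv (v k 0) / alpha) ->
  (* gradient flow on [0,T] (with c fixed) *)
  (forall k, {within `[0, T], continuous (g k)}) ->
  (forall k j, {within `[0, T], continuous (fun s => v k s 0 j)}) ->
  (forall k t, t \in `]0, T[ ->
     is_derive t (1 : R) (g k)
       (- ((Num.sqrt m%:R)^-1 * c k * \sum_(i < n)
            (preds c (g ^~ t) (v ^~ t) x i 0 - y i 0)
            * relu (dotv (v k t) (x i)) / normv (v k t)))) ->
  (forall k j t, t \in `]0, T[ ->
     is_derive t (1 : R) (fun s => v k s 0 j)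
       (- ((Num.sqrt m%:R)^-1 * c k * g k t / normv (v k t) * \sum_(i < n)
            (preds c (g ^~ t) (v ^~ t) x i 0 - y i 0)
            * ind (v k t) (x i) * perp (v k t) (x i) 0 j))) ->
  (* consequence of gradient flow stated in the paper: df/dt = -(V/alpha^2 + G)(f - y) *)
  (forall i, {within `[0, T], continuous (fun s => preds c (g ^~ s) (v ^~ s) x i 0)}) ->
  (forall i t, t \in `]0, T[ ->
     is_derive t (1 : R) (fun s => preds c (g ^~ s) (v ^~ s) x i 0)
       (- (((alpha ^+ 2)^-1 *: Vmat alpha c (g ^~ t) (v ^~ t) x
              + Gmat (v ^~ t) x)
           *m (preds c (g ^~ t) (v ^~ t) x - y)) i 0)) ->
  (* eigenvalue hypothesis *)
  0 < om ->
  (forall t, t \in `[0, T] ->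
     om / 2 <= lambda_min (Gmat (v ^~ t) x
                           + (alpha ^+ 2)^-1 *: Vmat alpha c (g ^~ t) (v ^~ t) x)) ->
  forall k t, t \in `[0, T] ->
    `|g k t - g k 0| <=
      4 * Num.sqrt n%:R * normc (preds c (g ^~ 0) (v ^~ 0) x - y)
        / (Num.sqrt m%:R * om).
Proof.
move=> hx ha hc hg0 gcont vcont gder vder fcont fder om0 hlam k t tin.
pose F s := preds c (g ^~ s) (v ^~ s) x.
pose r s (i : 'I_n) := F s i 0 - y i 0.
pose h s := \sum_(i < n) r s i * r s i.
pose Hm s := Gmat (v ^~ s) x + (alpha ^+ 2)^-1 *: Vmat alpha c (g ^~ s) (v ^~ s) x.
have [t0 tT] : 0 <= t /\ t <= T by move: tin; rewrite in_setE /= in_itv /= => /andP[].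
have T0 : 0 <= T := le_trans t0 tT.
have openT u s : s <= T -> u \in `]0, s[%R -> u \in `]0, T[.
  move=> sT hu; rewrite in_setE /=; move: hu; rewrite !in_itv /= => /andP[h1 h2]; by rewrite h1 (lt_le_trans h2 sT).
have closedT u : u \in `]0, T[ -> u \in `[0, T].
  rewrite !in_setE /= !in_itv /= => /andP[h1 h2]; by rewrite !ltW.
have HmT s : (Hm s)^T = Hm s by rewrite /Hm linearD /= linearZ /= Gmat_sym Vmat_sym.
have quad s : s \in `[0, T] ->
    om / 2 * h s <= \sum_(i < n) r s i * (Hm s *m (F s - y)) i 0.
  move=> sin.
  have := psd_lambda (HmT s) (hlam s sin) ((F s - y)^T).
  rewrite quad_col // dotv_sq.
  under eq_bigr do rewrite trE entryB.
  under [X in _ <= X]eq_bigr do rewrite entryB.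
  by under eq_bigr do rewrite expr2.

pose q s i := (Hm s *m (F s - y)) i 0.
pose dh s := \sum_(i < n) (r s i * (- q s i) + r s i * (- q s i)).
have hder s : s \in `]0, T[ -> is_derive s 1 h (dh s).
  move=> sin.
  have e : (alpha ^+ 2)^-1 *: Vmat alpha c (g ^~ s) (v ^~ s) x + Gmat (v ^~ s) x = Hm s.
    by rewrite /Hm addrC.
  apply: dr_sum => i.
  have dri : is_derive s 1 (fun s => r s i) (- q s i).
    have := dr_sub (fder i s sin) (dr_cst (y i 0) s).
    by rewrite e subr0.
  exact: (dr_mul dri dri).
have dhle s : s \in `[0, T] -> dh s <= - (om * h s).
  move=> sin; have := quad s sin.
  have -> : dh s = (-2) * \sum_(i < n) r s i * q s i.
    by rewrite mulr_sumr; apply: eq_bigr => i _; ring.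
  lra.
pose E s := expR (om * s) * h s.
have Econt : {within `[0, T], continuous E}.
  apply: wc_mul; first exact: wc_exp_lin.
  apply: wc_sum => i; apply: wc_mul; apply: wc_sub; (exact: fcont || exact: wc_cst).
have hdec s : 0 <= s <= T -> h s <= expR (- (om * s)) * h 0.
  move=> /andP[s0 sT].
  have : E s <= E 0.
  apply: (@mono_le _ E (fun u => expR (om * u) * dh u + h u * (om * expR (om * u))) s s0).
  - move=> u uin; apply: dr_mul; first exact: dr_exp_lin.
    exact: hder (openT u s sT uin).
  - exact: wc_sub_itv sT Econt.
  - move=> u uin; have uin' := closedT u (openT u s sT uin).
    have := dhle u uin'; have := expR_gt0 (om * u) => e0 hd.
    have := ler_wpM2l (ltW e0) hd; lra.
  rewrite /E mulr0 expR0 mul1r => hE.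
  have := ler_wpM2l (expR_ge0 (- (om * s))) hE.
  by rewrite mulrA -expRD addNr expR0 mul1r.

have h0ge s : 0 <= h s.
  by apply: sumr_ge0 => i _; rewrite -expr2; exact: sqr_ge0.
pose N0 := Num.sqrt (h 0).
have N0ge : 0 <= N0 by exact: sqrtr_ge0.
pose e s := expR (- (om / 2) * s).
have sqdec s : 0 <= s <= T -> Num.sqrt (h s) <= e s * N0.
  move=> sin; have hs := hdec s sin.
  have ee : expR (- (om * s)) = e s ^+ 2.
    by rewrite /e -expRM_natl; congr expR; field.
  rewrite ee in hs.
  have rhs0 : 0 <= e s ^+ 2 * h 0 by rewrite mulr_ge0 // sqr_ge0.
  apply: le_trans (_ : Num.sqrt (h s) <= Num.sqrt (e s ^+ 2 * h 0)) _.
    by rewrite ler_sqrt.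
  by rewrite sqrtrM ?sqr_ge0 // sqrtr_sqr ger0_norm // expR_ge0.
pose A := (Num.sqrt m%:R)^-1 * Num.sqrt n%:R * N0.
have A0 : 0 <= A by rewrite /A !mulr_ge0 // ?invr_ge0 sqrtr_ge0.
pose dg s := - ((Num.sqrt m%:R)^-1 * c k * \sum_(i < n)
            (preds c (g ^~ s) (v ^~ s) x i 0 - y i 0)
            * relu (dotv (v k s) (x i)) / normv (v k s)).
have dgb s : 0 <= s <= T -> `|dg s| <= A * e s.
  move=> sin.
  rewrite /dg normrN normrM normrM.
  have -> : `|c k| = 1 by case: (hc k) => ->; rewrite ?normrN normr1.
  rewrite mulr1 ger0_norm ?invr_ge0 ?sqrtr_ge0 //.
  under eq_bigr do rewrite -mulrA.
  have sb := @sum_bound R n (r s) (fun i => relu (dotv (v k s) (x i)) / normv (v k s))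
     (fun i => a_bounds (v k s) (hx i)).
  have hh : \sum_(i < n) r s i ^+ 2 = h s by apply: eq_bigr => i _; rewrite expr2.
  rewrite hh in sb.
  rewrite /A -!mulrA; apply: ler_wpM2l; first by rewrite invr_ge0 sqrtr_ge0.
  apply: le_trans sb _; apply: ler_wpM2l; first exact: sqrtr_ge0.
  by rewrite mulrC; exact: sqdec.

have omn0 : om != 0 by rewrite gt_eqF.
pose psi (s : R) : R := - (2 * A / om) * expR (- (om / 2) * s).
have psider (s : R) : is_derive s (1 : R) psi (A * e s).
  have H := @dr_scal _ _ _ (- (2 * A / om)) _ (dr_exp_lin (- (om / 2)) s).
  by apply: is_derive_eq H _; rewrite /e; field.
have psicont : {within `[0, T], continuous psi}.
  by apply: wc_mul; [exact: wc_cst | exact: wc_exp_lin].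
have inT u : u \in `]0, t[%R -> 0 <= u <= T.
  move=> uin; have := closedT u (openT u t tT uin).
  by rewrite in_setE /= in_itv.
have le1 : g k t - psi t <= g k 0 - psi 0.
  apply: (@mono_le _ (fun s => g k s - psi s) (fun s => dg s - A * e s) t t0).
  - move=> u uin; exact: dr_sub (gder k u (openT u t tT uin)) (psider u).
  - by apply: wc_sub_itv tT _; apply: wc_sub; [exact: gcont | exact: psicont].
  - move=> u uin; have := dgb u (inT u uin); have := ler_norm (dg u); lra.
have le2 : (-1) * g k t - psi t <= (-1) * g k 0 - psi 0.
  apply: (@mono_le _ (fun s => (-1) * g k s - psi s) (fun s => (-1) * dg s - A * e s) t t0).
  - move=> u uin; exact: dr_sub (@dr_scal _ _ _ (-1) _ (gder k u (openT u t tT uin))) (psider u).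
  - apply: wc_sub_itv tT _; apply: wc_sub; last exact: psicont.
    by apply: wc_mul; [exact: wc_cst | exact: gcont].
  - move=> u uin; have := dgb u (inT u uin); have := ler_norm (- dg u).
    rewrite normrN; lra.
have psi0 : psi 0 = - (2 * A / om) by rewrite /psi mulr0 expR0 mulr1.
have psit : psi t <= 0.
  rewrite /psi mulNr oppr_le0; apply: mulr_ge0; last exact: expR_ge0.
  by apply: divr_ge0; [lra | exact: ltW].
have bnd : `|g k t - g k 0| <= 2 * A / om.
  rewrite ler_norml; apply/andP; split; lra.
apply: le_trans bnd _.
have nc : normc (preds c (g ^~ 0) (v ^~ 0) x - y) = N0.
  rewrite /normc /N0 /h; congr Num.sqrt; apply: eq_bigr => i _.
  by rewrite entryB expr2.
rewrite nc invfM.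
set X := (Num.sqrt m%:R)^-1 * Num.sqrt n%:R * N0 / om.
have X0 : 0 <= X by rewrite /X mulr_ge0 // invr_ge0 ltW.
have -> : 4 * Num.sqrt n%:R * N0 * ((Num.sqrt m%:R)^-1 * om^-1) = 4 * X.
  by rewrite /X; ring.
have -> : 2 * A / om = 2 * X by rewrite /X /A; ring.
lra.
Qed.
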